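(* Let $(S,|\cdot|)$ be a finite metric space with $n$ points, let $t\ge1$ be a real number, and let $G'=(S,E')$ be a $t$-spanner for $S$ with $m$ edges. Then for any integer $f$ with $1\le f\le (n-1)/2$, the graph $G=(S,E)$ obtained from $G'$ by the construction in the context is an $f$-faulty-degree $((8f+2)t)$-spanner for $S$ that has at most $(4f-1)m$ edges.
   Context: For a finite metric space $(S,|\cdot|)$, $K_S$ denotes the complete graph on $S$ in which each edge $\{p,q\}$ has weight $|pq|$. All graphs on vertex set $S$ considered have edge weights $|pq|$. For an edge-weighted graph $X$ and vertices $p,q$, $\delta_X(p,q)$ is the length of a shortest path between $p$ and $q$ in $X$ ($+\infty$ if none exists). For a set $F$ of edges, $X\setminus F$ is the graph with the same vertex set as $X$ and edge set $E_X\setminus F$. A graph $G'=(S,E')$ is a $t$-spanner for $S$ if $\delta_{G'}(p,q)\le t|pq|$ for all $p,q\in S$. For an integer $f\ge 0$ and real $t\ge1$, a graph $G=(S,E)$ is an $f$-faulty-degree $t$-spanner for $S$ if for every subset $F\subseteq E$ such that the graph $(S,F)$ has maximum degree at most $f$, and for all $p,q\in S$, $\delta_{G\setminus F}(p,q)\le t\cdot\delta_{K_S\setminus F}(p,q)$. Construction: Let $G'=(S,E')$ be a $t$-spanner for $S$, $n=|S|$, and let $f$ be an integer with $1\le f\le (n-1)/2$. For each edge $\{a,b\}\in E'$, list the points of $S\setminus\{a,b\}$ as $c_1,\dots,c_{n-2}$ in non-decreasing order of $|ac_i|+|c_ib|$ (ties broken arbitrarily) and let $C_{ab}=\{c_1,\dots,c_{2f-1}\}$.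 The graph $G=(S,E)$ has edge set $E=E'\cup\{\{a,c\},\{c,b\}:\{a,b\}\in E',\ c\in C_{ab}\}$. *)

(* Defs.v *)
From HB Require Import structures.
From mathcomp Require Import all_boot all_order all_algebra.
From mathcomp Require Import boolp classical_sets reals constructive_ereal ereal.
Set Implicit Arguments. Unset Strict Implicit. Unset Printing Implicit Defensive.
Import Order.TTheory GRing.Theory Num.Theory.
Local Open Scope ring_scope.

Section Defs.
Variables (R : realType) (T : finType).

Definition is_metric (d : T -> T -> R) : Prop :=
  [/\ forall x y, d x y = 0 <-> x = y,
      forall x y, d x y = d y x,
      forall x y, 0 <= d x y
    & forall x y z, d x z <= d x y + d y z].

(* A graph on vertex set T is given by its edge set: a set of 2-element
   subsets {p,q} of T; edge {p,q} has weight d p q. *)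
Definition simple_edges (E : {set {set T}}) : Prop :=
  forall e, e \in E -> #|e| = 2%N.

Definition complete_edges : {set {set T}} := [set e : {set T} | #|e| == 2%N].

(* walks: p :: s is a walk in E ending at last p s *)
Definition is_walk (E : {set {set T}}) (p : T) (s : seq T) : bool :=
  path (fun x y => [set x; y] \in E) p s.

Fixpoint walk_len (d : T -> T -> R) (p : T) (s : seq T) : R :=
  if s is x :: s' then d p x + walk_len d x s' else 0.

(* delta_X(p,q): length of a shortest path, +oo if none *)
Definition sp_dist (d : T -> T -> R) (E : {set {set T}}) (p q : T) : \bar R :=
  ereal_inf [set (walk_len d p s)%:E | s in
               [set s : seq T | is_walk E p s && (last p s == q)]]%classic.

Definition is_t_spanner (d : T -> T -> R) (t : R) (E : {set {set T}}) : Prop :=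
  forall p q, (sp_dist d E p q <= (t * d p q)%:E)%E.

Definition max_deg_le (F : {set {set T}}) (f : nat) : Prop :=
  forall v, (#|[set e in F | v \in e]| <= f)%N.

Definition is_fault_degree_spanner (d : T -> T -> R) (f : nat) (t : R)
    (E : {set {set T}}) : Prop :=
  forall F : {set {set T}}, F \subset E -> max_deg_le F f ->
    forall p q,
      (sp_dist d (E :\: F) p q <= t%:E * sp_dist d (complete_edges :\: F) p q)%E.

(* [ord e] is, for each edge e = {a,b} of E', a listing c_1,...,c_{n-2} of
   S \ {a,b} in non-decreasing order of |ac|+|cb| (ties broken arbitrarily). *)
Definition valid_orders (d : T -> T -> R) (E' : {set {set T}})
    (ord : {set T} -> seq T) : Prop :=
  forall a b, a != b -> [set a; b] \in E' ->
    perm_eq (ord [set a; b]) (enum (~: [set a; b])) /\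
    sorted (fun x y => d a x + d x b <= d a y + d y b) (ord [set a; b]).

Definition C_set (ord : {set T} -> seq T) (f : nat) (e : {set T}) : {set T} :=
  [set c in take (2 * f - 1) (ord e)].

Definition fd_construction (E' : {set {set T}}) (ord : {set T} -> seq T)
    (f : nat) : {set {set T}} :=
  E' :|: [set e : {set T} | [exists a : T, exists b : T, exists c : T,
            [&& a != b, [set a; b] \in E', c \in C_set ord f [set a; b]
              & (e == [set a; c]) || (e == [set c; b])]]].

End Defs.

(* Main.v *)
Require Import Defs.
From HB Require Import structures.
From mathcomp Require Import all_boot all_order all_algebra.
From mathcomp Require Import boolp classical_sets reals constructive_ereal ereal.
From mathcomp Require Import zify lra.
From mathcomp Require Import fintype finset.
Import Order.TTheory GRing.Theory Num.Theory.
Local Open Scope ring_scope.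
Set Implicit Arguments. Unset Strict Implicit.
Section Walks.
Variables (R : realType) (T : finType) (d : T -> T -> R).
Hypothesis dm : is_metric d.

Lemma d_ge0 x y : 0 <= d x y. Proof. by case: dm. Qed.
Lemma d_sym x y : d x y = d y x. Proof. by case: dm. Qed.
Lemma d_tri x y z : d x z <= d x y + d y z. Proof. by case: dm. Qed.
Lemma d_xx x : d x x = 0. Proof. by case: dm => H _ _ _; apply/H. Qed.

Lemma walk_len_ge0 p s : 0 <= walk_len d p s.
Proof. elim: s p => [|v s IH] p /=; first by []. by rewrite addr_ge0 ?d_ge0. Qed.

Lemma walk_len_cat p s1 s2 :
  walk_len d p (s1 ++ s2) = walk_len d p s1 + walk_len d (last p s1) s2.
Proof. elim: s1 p => [|v s IH] p /=; first by rewrite add0r. by rewrite IH addrA. Qed.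

Lemma walk_len_tri p s : d p (last p s) <= walk_len d p s.
Proof.
elim: s p => [|v s IH] p /=; first by rewrite d_xx.
apply: le_trans (d_tri p v (last v s)) _; by rewrite lerD2l.
Qed.

Lemma shorten_walk E x s : is_walk E x s -> exists s',
  [/\ is_walk E x s', last x s' = last x s, uniq (x :: s')
    & walk_len d x s' <= walk_len d x s].
Proof.
elim: s x => [|v s IH] x /=.
  by move=> _; exists [::]; split.
rewrite /is_walk /= => /andP [exv ps].
have [s' [ps' ls' us' ws']] := IH v ps.
have le1 : walk_len d v s' <= d x v + walk_len d v s.
  by apply: le_trans ws' _; rewrite lerDr d_ge0.
case: (x =P v) => [xv|nxv].
  subst v; exists s'; split => //.
case: (boolP (x \in s')) => xin.
  case/splitPr: xin ps' ls' us' ws' le1 => p1 p2.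
  rewrite /is_walk cat_path /= => /and3P [_ _ pp2] ls' us' _ le1.
  exists p2; split => //.
  - by rewrite -ls' last_cat.
  - by move: us' => /andP [_]; rewrite cat_uniq => /and3P [_ _].
  - apply: le_trans le1; rewrite walk_len_cat /=.
    have := walk_len_ge0 v p1; have := d_ge0 (last v p1) x; lra.
exists (v :: s'); split => //=.
- by rewrite /is_walk /= exv.
- move: us' => /= /andP [vs us']; rewrite vs us' !andbT inE negb_or xin andbT. by apply/eqP.
- by rewrite lerD2l.
Qed.

Definition vtx (x : T) (s : seq T) (j : nat) := nth x (x :: s) j.

Lemma walk_len_sum x s :
  walk_len d x s = \sum_(0 <= m < size s) d (vtx x s m) (vtx x s m.+1).
Proof.
elim: s x => [|v s IH] x /=; first by rewrite big_geq.
rewrite big_nat_recl //= IH; congr (_ + _).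
apply: eq_big_nat => m /andP [_ lm].
rewrite /vtx /= (set_nth_default x v) //.
case: m lm => [|m] lm //=; rewrite (set_nth_default x v) //.
by rewrite ltnS ltnW.
Qed.

Lemma vtx_dist x s i j : (i <= j <= size s)%N ->
  d (vtx x s i) (vtx x s j) <= \sum_(i <= m < j) d (vtx x s m) (vtx x s m.+1).
Proof.
move=> /andP [ij js].
elim: j ij js => [|j IH] ij js.
  by move: ij; rewrite leqn0 => /eqP ->; rewrite big_geq // d_xx.
case: (ltngtP i j.+1) ij => // [lt|eq] _.
  rewrite big_nat_recr //=.
  apply: le_trans (d_tri _ (vtx x s j) _) _.
  by rewrite lerD2r IH // ltnW.
by subst i; rewrite big_geq // d_xx.
Qed.

Lemma sum_sub (w : nat -> R) a b c e : (forall m, 0 <= w m) ->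
  (a <= b)%N -> (b <= c)%N -> (c <= e)%N ->
  \sum_(b <= m < c) w m <= \sum_(a <= m < e) w m.
Proof.
move=> w0 ab bc ce.
rewrite (@big_cat_nat _ _ _ b a e) //=; last exact: leq_trans bc ce.
rewrite (@big_cat_nat _ _ _ c b e) //=.
have h1 : 0 <= \sum_(a <= m < b) w m by rewrite sumr_ge0.
have h2 : 0 <= \sum_(c <= m < e) w m by rewrite sumr_ge0.
lra.
Qed.


Lemma vtx_cons x v s m : (m <= size s)%N -> vtx x (v :: s) m.+1 = vtx v s m.
Proof. by move=> ms; rewrite /vtx /= (set_nth_default v x). Qed.

Lemma concat_walks (E : {set {set T}}) x s (c : nat -> R) :
  (forall m, (m < size s)%N -> exists q, [/\ is_walk E (vtx x s m) q,
       last (vtx x s m) q = vtx x s m.+1 & walk_len d (vtx x s m) q <= c m]) ->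
  exists q, [/\ is_walk E x q, last x q = last x s &
     walk_len d x q <= \sum_(0 <= m < size s) c m].
Proof.
elim: s x c => [|v s IH] x c H.
  by exists [::]; split => //=; rewrite big_geq.
have [q0 [w0 l0 c0]] := H 0%N isT.
have H1 : forall m, (m < size s)%N -> exists q, [/\ is_walk E (vtx v s m) q,
       last (vtx v s m) q = vtx v s m.+1 & walk_len d (vtx v s m) q <= c m.+1].
  move=> m ms; have [q [wq lq cq]] := H m.+1 ms.
  have e1 : vtx v s m = vtx x (v :: s) m.+1 by rewrite vtx_cons // ltnW.
  have e2 : vtx v s m.+1 = vtx x (v :: s) m.+2 by rewrite vtx_cons.
  by exists q; rewrite e1 e2.
have [q1 [w1 l1 c1]] := IH v (fun m => c m.+1) H1.
exists (q0 ++ q1); split.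
- by rewrite /is_walk cat_path; apply/andP; split => //; rewrite l0.
- by rewrite last_cat l0 l1.
- rewrite walk_len_cat l0 big_nat_recl //=; exact: lerD.
Qed.


Lemma sp_le_walk E p q s : is_walk E p s -> last p s = q ->
  (sp_dist d E p q <= (walk_len d p s)%:E)%E.
Proof.
move=> ws ls; apply: ge_ereal_inf; exists (walk_len d p s)%:E => //.
by exists s => //=; rewrite ws ls eqxx.
Qed.

Lemma sp_walk_lt E p q (r : R) : (sp_dist d E p q < r%:E)%E ->
  exists s, [/\ is_walk E p s, last p s = q & walk_len d p s < r].
Proof.
move=> /ereal_inf_lt [y [s /= /andP [ws /eqP ls] <-]]; rewrite lte_fin => lt.
by exists s.
Qed.

Variables (E' : {set {set T}}) (f : nat) (ord : {set T} -> seq T).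
Hypotheses (f1 : (1 <= f)%N) (nT : (2 * f + 1 <= #|T|)%N)
  (vo : valid_orders d E' ord).

Lemma ord_props a b : a != b -> [set a; b] \in E' ->
  [/\ uniq (ord [set a; b]), size (ord [set a; b]) = (#|T| - 2)%N
    & forall c, (c \in ord [set a; b]) = (c != a) && (c != b)].
Proof.
move=> ab abE; have [pe so] := vo ab abE.
split.
- by rewrite (perm_uniq pe) enum_uniq.
- rewrite (perm_size pe) -cardE; have := cardsC [set a; b]; rewrite cards2 ab; lia.
- by move=> c; rewrite (perm_mem pe) mem_enum !inE negb_or.
Qed.

Lemma C_mem a b c : a != b -> [set a; b] \in E' ->
  c \in C_set ord f [set a; b] -> (c != a) && (c != b).
Proof.
move=> ab abE; rewrite inE => /mem_take.
by have [_ _ ->] := ord_props ab abE.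
Qed.

Lemma size_takeC a b : a != b -> [set a; b] \in E' ->
  size (take (2 * f - 1) (ord [set a; b])) = (2 * f - 1)%N.
Proof.
move=> ab abE; have [u sz _] := ord_props ab abE.
rewrite size_take sz; case: ifP => // h; move: h nT f1; clear; lia.
Qed.

Lemma C_card a b : a != b -> [set a; b] \in E' ->
  #|C_set ord f [set a; b]| = (2 * f - 1)%N.
Proof.
move=> ab abE; have [u sz _] := ord_props ab abE.
rewrite /C_set cardsE; move/card_uniqP: (take_uniq (2 * f - 1) u) => ->.
exact: size_takeC.
Qed.

Lemma C_edges a b c : a != b -> [set a; b] \in E' ->
  c \in C_set ord f [set a; b] ->
  [set a; c] \in fd_construction E' ord f /\ [set c; b] \in fd_construction E' ord f.
Proof.
move=> ab abE cC; split; rewrite /fd_construction inE; apply/orP; right;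
  rewrite inE; apply/existsP; exists a; apply/existsP; exists b;
  apply/existsP; exists c; by rewrite ab abE cC eqxx //= orbT.
Qed.

Lemma E'_sub : E' \subset fd_construction E' ord f.
Proof. by apply/fintype.subsetP => e eE; rewrite inE eE. Qed.

Section Faults.
Variable F : {set {set T}}.
Hypothesis Fdeg : max_deg_le F f.

Definition blocked a b z := ([set a; z] \in F) || ([set z; b] \in F).

Lemma set2_inj (a z1 z2 : T) : z1 != a -> z2 != a -> [set a; z1] = [set a; z2] -> z1 = z2.
Proof.
move=> z1a z2a eq; have : z1 \in [set a; z2] by rewrite -eq !inE eqxx orbT.
by rewrite !inE (negbTE z1a) => /eqP.
Qed.

Lemma blocked_card a b : a != b -> [set a; b] \in F ->
  (#|[set z | (z != a) && (z != b) && blocked a b z]| <= 2 * f - 2)%N.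
Proof.
move=> ab abF.
set Ba := [set z | (z != a) && (z != b) && ([set a; z] \in F)].
set Bb := [set z | (z != a) && (z != b) && ([set z; b] \in F)].
have sub : [set z | (z != a) && (z != b) && blocked a b z] \subset Ba :|: Bb.
  apply/fintype.subsetP => z; rewrite !inE /blocked.
  by case: (z != a); case: (z != b); case: ([set a; z] \in F).
have cA : (#|Ba| <= f - 1)%N.
  have inj : {in Ba &, injective (fun z => [set a; z])}.
    move=> z1 z2; rewrite !inE => /andP [/andP [z1a _] _] /andP [/andP [z2a _] _].
    exact: set2_inj.
  rewrite -(card_in_imset inj).
  have sub2 : (fun z => [set a; z]) @: Ba \subset [set e in F | a \in e] :\ [set a; b].
    apply/fintype.subsetP => e /imsetP [z]; rewrite !inE => /andP [/andP [za zb] zF] ->.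
    rewrite zF !inE eqxx /= andbT; apply/negP => /eqP eq.
    have ba : b != a by rewrite eq_sym.
    by move: (set2_inj za ba eq) zb => ->; rewrite eqxx.
  apply: leq_trans (subset_leq_card sub2) _.
  have h : [set a; b] \in [set e in F | a \in e] by rewrite !inE abF ?inE eqxx.
  by have := Fdeg a; rewrite (cardsD1 [set a; b]) h add1n => H; rewrite subn1 -ltnS prednK.
have cB : (#|Bb| <= f - 1)%N.
  have inj : {in Bb &, injective (fun z => [set z; b])}.
    move=> z1 z2; rewrite !inE => /andP [/andP [_ z1b] _] /andP [/andP [_ z2b] _].
    move=> eq; apply: (set2_inj z1b z2b); by rewrite finset.setUC eq finset.setUC.
  rewrite -(card_in_imset inj).
  have sub2 : (fun z => [set z; b]) @: Bb \subset [set e in F | b \in e] :\ [set a; b].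
    apply/fintype.subsetP => e /imsetP [z]; rewrite !inE => /andP [/andP [za zb] zF] ->.
    rewrite zF !inE eqxx /= orbT andbT; apply/negP => /eqP eq.
    move: eq; rewrite finset.setUC [[set a; b]]finset.setUC => eq.
    by move: (set2_inj zb ab eq) za => ->; rewrite eqxx.
  apply: leq_trans (subset_leq_card sub2) _.
  have h : [set a; b] \in [set e in F | b \in e] by rewrite !inE abF ?inE eqxx orbT.
  by have := Fdeg b; rewrite (cardsD1 [set a; b]) h add1n => H; rewrite subn1 -ltnS prednK.
apply: leq_trans (subset_leq_card sub) _.
apply: leq_trans (leq_card_setU _ _) _; move: cA cB f1; clear; lia.
Qed.

Lemma detour a b z : a != b -> [set a; b] \in E' -> [set a; b] \in F ->
  z != a -> z != b ->
  ~~ blocked a b z || (z \notin C_set ord f [set a; b]) ->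
  exists c, [/\ [set a; c] \in fd_construction E' ord f :\: F,
    [set c; b] \in fd_construction E' ord f :\: F &
    d a c + d c b <= d a z + d z b].
Proof.
move=> ab abE abF za zb H.
have [us sz mems] := ord_props ab abE.
have [_ so] := vo ab abE.
set s := ord [set a; b] in us sz mems so *.
set p := fun c => ~~ blocked a b c.
set i := find p s.
have zs : z \in s by rewrite mems za zb.
have bc := blocked_card ab abF.
have cc := C_card ab abE.
have i_lt : (i < 2 * f - 1)%N.
  rewrite ltnNge; apply/negP => le.
  have sub : C_set ord f [set a; b] \subset
      [set z | (z != a) && (z != b) && blocked a b z].
    apply/fintype.subsetP => c; rewrite !inE => ct.
    have cs : c \in s := mem_take ct.
    rewrite -mems cs /=.
    have jlt : (index c (take (2 * f - 1) s) < 2 * f - 1)%N.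
      by apply: leq_trans (_ : index c _ < size (take (2 * f - 1) s))%N _;
        [rewrite index_mem | rewrite size_takeC].
    have := nth_index c ct; rewrite nth_take // => e.
    have := before_find c (leq_trans jlt le); rewrite e /p => /negbFE.
    by [].
  have := subset_leq_card sub; rewrite cc => h; move: (leq_trans h bc) f1; clear; lia.
have iS : (i < size s)%N by rewrite sz; move: i_lt nT; clear; lia.
set c := nth z s i.
have pc : p c by apply: nth_find; rewrite has_find.
have cC : c \in C_set ord f [set a; b].
  rewrite inE /c -(nth_take z i_lt); apply: mem_nth.
  by rewrite size_takeC.
have [e1 e2] := C_edges ab abE cC.
move: pc; rewrite /p /blocked negb_or => /andP [n1 n2].
exists c; split; [by rewrite in_setD n1 e1 | by rewrite in_setD n2 e2 |].
have ij : (i <= index z s)%N.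
  case/orP: H => [pz | zC].
    rewrite leqNgt; apply/negP => lt.
    by have := before_find z lt; rewrite nth_index // => /negbT; rewrite /p pz.
  rewrite leqNgt; apply/negP => lt.
  have lt2 : (index z s < 2 * f - 1)%N by apply: ltn_trans lt i_lt.
  have hs : (index z s < size (take (2 * f - 1) s))%N.
    by rewrite size_takeC.
  have zt : z \in take (2 * f - 1) s.
    by have := mem_nth z hs; rewrite nth_take // nth_index.
  by move: zC; rewrite inE zt.
have tr : transitive (fun x y => d a x + d x b <= d a y + d y b).
  by move=> y x w h1 h2; apply: le_trans h1 h2.
have rf : reflexive (fun x y => d a x + d x b <= d a y + d y b).
  by move=> x.
have := sorted_leq_nth tr rf z so; move=> /(_ i (index z s)).
rewrite !inE iS index_mem zs => /(_ isT isT ij).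
by rewrite nth_index.
Qed.
Lemma sum_cond (G : nat -> R) i j N : (j <= N)%N ->
  \sum_(i <= l < j) G l =
  \sum_(0 <= l < N) (if (i <= l)%N && (l < j)%N then G l else 0).
Proof.
move=> jN; rewrite (big_nat_widenl i 0 j _ _ (leq0n i)) (big_nat_widen 0 j N _ _ jN).
by rewrite big_mkcond.
Qed.

Lemma count_range0 N a b :
  (\sum_(0 <= m < N) ((a <= m) && (m < b) : nat) <= minn N b - a)%N.
Proof.
elim: N => [|N IH]; first by rewrite big_geq.
rewrite big_nat_recr //=.
case: (boolP ((a <= N) && (N < b))%N) => /= h.
  move/andP: h => [h1 h2]; move: IH h1 h2; clear; rewrite /minn; case: ifP; case: ifP; lia.
move: IH h; clear; rewrite /minn; case: ifP; case: ifP; lia.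
Qed.

Lemma count_range N a b :
  (\sum_(0 <= m < N) ((a <= m) && (m < b) : nat) <= b - a)%N.
Proof. apply: leq_trans (count_range0 N a b) _; apply: leq_sub2r; exact: geq_minr. Qed.
Lemma double_count (w : nat -> R) k : (forall l, 0 <= w l) ->
  \sum_(0 <= m < k) \sum_(m.+1 - 2 * f <= l < minn k (m + 2 * f)) w l
  <= (4 * f - 1)%:R * \sum_(0 <= l < k) w l.
Proof.
move=> w0.
have e : forall m, \sum_(m.+1 - 2 * f <= l < minn k (m + 2 * f)) w l =
  \sum_(0 <= l < k) (if (m.+1 - 2 * f <= l)%N && (l < minn k (m + 2 * f))%N
                     then w l else 0).
  move=> m; apply: sum_cond; exact: geq_minl.
rewrite (eq_bigr _ (fun m _ => e m)) exchange_big_nat big_distrr /=.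
apply: ler_sum => l _.
apply: (@le_trans _ _ (\sum_(0 <= m < k)
   (((l.+1 - 2 * f <= m)%N && (m < l + 2 * f)%N : nat)%:R * w l))).
  apply: ler_sum => m _.
  case: ifP => [/andP [h1 h2] | _]; last first.
    by apply: mulr_ge0 => //; apply: ler0n.
  have -> : ((l.+1 - 2 * f <= m) && (m < l + 2 * f))%N.
    apply/andP; split; move: h1 h2; clear; lia.
  by rewrite mul1r.
rewrite -mulr_suml -natr_sum ler_wpM2r // ler_nat.
apply: leq_trans (count_range _ _ _) _; move: f1; clear; lia.
Qed.
Local Notation EE := (fd_construction E' ord f).

Definition Bad a b := [set z | (z != a) && (z != b) && blocked a b z] :|: [set a; b].

Lemma Bad_card a b : a != b -> [set a; b] \in F -> (#|Bad a b| <= 2 * f)%N.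
Proof.
move=> ab abF; apply: leq_trans (leq_card_setU _ _) _.
have := blocked_card ab abF; rewrite cards2 ab; move: f1; clear; lia.
Qed.

Lemma notBad a b z : z \notin Bad a b ->
  [/\ z != a, z != b & ~~ blocked a b z].
Proof.
rewrite !inE negb_or => /andP [h1 h2].
move: h2; rewrite negb_or => /andP [za zb].
by move: h1; rewrite za zb.
Qed.

Lemma find_good a b (X : {set T}) : a != b -> [set a; b] \in F ->
  (2 * f < #|X|)%N -> exists2 z, z \in X & z \notin Bad a b.
Proof.
move=> ab abF lt; apply/subsetPn; apply/negP => sub.
have := leq_trans (subset_leq_card sub) (Bad_card ab abF); move: lt; clear; lia.
Qed.

Lemma C_order a b z c : a != b -> [set a; b] \in E' -> z != a -> z != b ->
  z \notin C_set ord f [set a; b] -> c \in C_set ord f [set a; b] ->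
  d a c + d c b <= d a z + d z b.
Proof.
move=> ab abE za zb zC cC.
have [us sz mems] := ord_props ab abE.
have [_ so] := vo ab abE.
set s := ord [set a; b] in us sz mems so zC cC *.
have zs : z \in s by rewrite mems za zb.
move: cC; rewrite inE => ct.
have cs : c \in s := mem_take ct.
have jlt : (index c (take (2 * f - 1) s) < 2 * f - 1)%N.
  by rewrite -{2}(size_takeC ab abE) index_mem.
have ec : nth c s (index c (take (2 * f - 1) s)) = c.
  by rewrite -(nth_take c jlt) nth_index.
have iz : (2 * f - 1 <= index z s)%N.
  rewrite leqNgt; apply/negP => lt2.
  have hs : (index z s < size (take (2 * f - 1) s))%N by rewrite size_takeC.
  have zt : z \in take (2 * f - 1) s.
    by have := mem_nth z hs; rewrite nth_take // nth_index.
  by move: zC; rewrite inE zt.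
have tr : transitive (fun x y => d a x + d x b <= d a y + d y b).
  by move=> y x w h1 h2; apply: le_trans h1 h2.
have rf : reflexive (fun x y => d a x + d x b <= d a y + d y b).
  by move=> x.
have jS : (index z s < size s)%N by rewrite index_mem.
have iS : (index c (take (2 * f - 1) s) < size s)%N.
  exact: leq_ltn_trans (leq_trans (ltnW jlt) iz) jS.
have ij : (index c (take (2 * f - 1) s) <= index z s)%N.
  exact: leq_trans (ltnW jlt) iz.
have := sorted_leq_nth tr rf c so; move=> /(_ _ _ _ _ ij).
rewrite !inE => /(_ iS jS); rewrite ec (set_nth_default z) // nth_index //.
Qed.
Section Core.
Variables (x y : T) (s : seq T).
Hypotheses (xy : x != y) (xyF : [set x; y] \notin F) (xyE : [set x; y] \notin EE)
  (ws : is_walk E' x s) (us : uniq (x :: s)) (ls : last x s = y).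

Local Notation v := (vtx x s).
Local Notation k := (size s).

Lemma HL : walk_len d x s = \sum_(0 <= m < k) d (v m) (v m.+1).
Proof. exact: walk_len_sum. Qed.

Lemma vk : v k = y.
Proof. by rewrite /vtx -last_nth. Qed.

Lemma vE m : (m < k)%N -> [set v m; v m.+1] \in E'.
Proof. by move=> mk; move/(pathP x): ws => /(_ m mk). Qed.

Lemma vinj i j : (i <= k)%N -> (j <= k)%N -> v i = v j -> i = j.
Proof.
move=> ik jk e; apply/eqP; rewrite -(nth_uniq x _ _ us) //=; first by apply/eqP.
Qed.

Lemma k2 : (2 <= k)%N.
Proof.
case Hk: k => [|[|k']] //.
  by move: xy; rewrite -vk Hk /vtx /= eqxx.
move: xyE; rewrite -vk Hk.
by have := vE (_ : 0 < k)%N; rewrite Hk => /(_ isT) /= h; rewrite (fintype.subsetP E'_sub _ h).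
Qed.

Lemma vdist i j lo hi : (lo <= i <= hi)%N -> (lo <= j <= hi)%N -> (hi <= k)%N ->
  d (v i) (v j) <= \sum_(lo <= l < hi) d (v l) (v l.+1).
Proof.
move=> /andP [li ih] /andP [lj jh] hk.
have w0 : forall l, 0 <= d (v l) (v l.+1) by move=> l; apply: d_ge0.
case: (leqP i j) => ij.
  have h : d (v i) (v j) <= \sum_(i <= l < j) d (v l) (v l.+1).
    by apply: vtx_dist; rewrite ij (leq_trans jh hk).
  exact: le_trans h (sum_sub w0 li ij jh).
have h : d (v j) (v i) <= \sum_(j <= l < i) d (v l) (v l.+1).
  by apply: vtx_dist; rewrite (ltnW ij) (leq_trans ih hk).
rewrite d_sym; exact: le_trans h (sum_sub w0 lj (ltnW ij) ih).
Qed.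

Lemma vL i j : (i <= k)%N -> (j <= k)%N -> d (v i) (v j) <= walk_len d x s.
Proof.
move=> ik jk; rewrite HL; apply: vdist => //; by rewrite ?ik ?jk.
Qed.

Lemma v_neq m : (m < k)%N -> v m != v m.+1.
Proof.
move=> mk; apply/eqP => /vinj; rewrite (ltnW mk) mk => /(_ isT isT) /eqP.
by rewrite eqn_leq ltnn andbF.
Qed.

Lemma good_long m : (2 * f <= k)%N -> (m < k)%N -> [set v m; v m.+1] \in F ->
  exists z, [/\ z != v m, z != v m.+1, ~~ blocked (v m) (v m.+1) z &
     d (v m) z + d z (v m.+1) <=
       2 * \sum_(m.+1 - 2 * f <= l < minn k (m + 2 * f)) d (v l) (v l.+1)].
Proof.
move=> fk mk abF.
set lo := (m.+1 - 2 * f)%N. set hi := minn k (m + 2 * f).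
have ab := v_neq mk.
have hik : (hi <= k)%N by apply: geq_minl.
set X := [set z in map v (iota lo (hi.+1 - lo))].
have uX : uniq (map v (iota lo (hi.+1 - lo))).
  rewrite map_inj_in_uniq ?iota_uniq // => i j; rewrite !mem_iota => /andP [_ hi1] /andP [_ hj1].
  apply: vinj.
    by move: hi1 mk; rewrite /lo /hi; clear; lia.
  by move: hj1 mk; rewrite /lo /hi; clear; lia.
have cX : #|X| = (hi.+1 - lo)%N.
  by rewrite cardsE; move/card_uniqP: uX => ->; rewrite size_map size_iota.
have [z zX zB] : exists2 z, z \in X & z \notin Bad (v m) (v m.+1).
  apply: find_good ab abF _; rewrite cX /hi /lo; move: fk mk f1; clear; lia.
have [za zb zbl] := notBad zB.
move: zX za zb zbl; rewrite inE => /mapP [j]; rewrite mem_iota => /andP [j1 j2] -> za zb zbl.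
exists (v j); split => //.
have h1 : d (v m) (v j) <= \sum_(lo <= l < hi) d (v l) (v l.+1).
  apply: vdist => //; apply/andP; split; rewrite /lo /hi; move: j1 j2 fk mk f1; clear; lia.
have h2 : d (v j) (v m.+1) <= \sum_(lo <= l < hi) d (v l) (v l.+1).
  apply: vdist => //; apply/andP; split; rewrite /lo /hi; move: j1 j2 fk mk f1; clear; lia.
lra.
Qed.

Lemma vxL j : (j <= k)%N -> d (v j) x <= walk_len d x s /\ d x (v j) <= walk_len d x s.
Proof. by move=> jk; split; [exact: (vL jk (leq0n k)) | exact: (vL (leq0n k) jk)]. Qed.

Lemma vyL j : (j <= k)%N -> d (v j) y <= walk_len d x s /\ d y (v j) <= walk_len d x s.
Proof. by move=> jk; rewrite -vk; split; [exact: (vL jk (leqnn k)) | exact: (vL (leqnn k) jk)]. Qed.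

Lemma good_short m : (k < 2 * f)%N -> (m < k)%N -> [set v m; v m.+1] \in F ->
  exists z, [/\ z != v m, z != v m.+1,
     ~~ blocked (v m) (v m.+1) z || (z \notin C_set ord f [set v m; v m.+1]) &
     d (v m) z + d z (v m.+1) <= 4 * walk_len d x s].
Proof.
move=> fk mk abF.
have ab := v_neq mk.
have abE := vE mk.
have L0 : 0 <= walk_len d x s := walk_len_ge0 x s.
have [dax dxa] := vxL (ltnW mk).
have [dbx dxb] := vxL mk.
have [day dya] := vyL (ltnW mk).
have [dby dyb] := vyL mk.
move: ab abE abF dax dxa dbx dxb day dya dby dyb.
set a := v m; set b := v m.+1 => ab abE abF dax dxa dbx dxb day dya dby dyb.
have setxy : forall u u', (x == u) -> (y == u') -> [set u; u'] = [set x; y].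
  by move=> u u' /eqP -> /eqP ->.
have setyx : forall u u', (y == u) -> (x == u') -> [set u; u'] = [set x; y].
  by move=> u u' /eqP -> /eqP ->; rewrite finset.setUC.
case: (boolP ((x == a) || (x == b))) => hx.
  have ya : y != a.
    apply/negP => ya; case/orP: hx => hx.
      by move: xy; rewrite (eqP hx) (eqP ya) eqxx.
    by move: xyF; rewrite -(setyx _ _ ya hx) abF.
  have yb : y != b.
    apply/negP => yb; case/orP: hx => hx.
      by move: xyF; rewrite -(setxy _ _ hx yb) abF.
    by move: xy; rewrite (eqP hx) (eqP yb) eqxx.
  exists y; split => //.
    apply/orP; right; apply/negP => yC.
    have [e1 e2] := C_edges ab abE yC.
    case/orP: hx => hx.
      by move: xyE; rewrite -(setxy _ _ hx (eqxx y)) e1.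
    by move: xyE; rewrite -(setyx _ _ (eqxx y) hx) e2.
  lra.
case: (boolP ((y == a) || (y == b))) => hy.
  move: hx; rewrite negb_or => /andP [xa xb].
  exists x; split => //.
    apply/orP; right; apply/negP => xC.
    have [e1 e2] := C_edges ab abE xC.
    case/orP: hy => hy.
      by move: xyE; rewrite -(setyx _ _ hy (eqxx x)) e1.
    by move: xyE; rewrite -(setxy _ _ (eqxx x) hy) e2.
  lra.
move: hx hy; rewrite !negb_or => /andP [xa xb] /andP [ya yb].
case: (boolP (blocked a b x)) => bx; last first.
  by exists x; split => //; [rewrite bx | lra].
case: (boolP (blocked a b y)) => by_; last first.
  by exists y; split => //; [rewrite by_ | lra].
have k2' := k2.
have x1 : x != v 1.
  apply/eqP => /(@vinj 0 1); rewrite leq0n => /(_ isT (ltnW k2')); done.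
have y1 : y != v 1.
  rewrite -vk; apply/eqP => /vinj; rewrite leqnn (ltnW k2') => /(_ isT isT) /eqP.
  by move: k2'; clear; case: (size s) => [|[|n]].
have E1 : [set x; v 1] \in E' := vE (leq_ltn_trans (leq0n 1) k2').
set C1 := C_set ord f [set x; v 1].
have yC1 : y \notin C1.
  apply/negP => yC; have [e1 _] := C_edges x1 E1 yC.
  by move: xyE; rewrite e1.
have xC1 : x \notin C1.
  by apply/negP => /(C_mem x1 E1); rewrite eqxx.
have cX : #|C1 :|: [set x; y]| = (2 * f + 1)%N.
  rewrite cardsU cards2 xy (C_card x1 E1).
  have -> : C1 :&: [set x; y] = set0.
    apply/setP => z; rewrite in_setI in_set0 in_set2; apply/negP => /andP [zC /orP [] /eqP ez].
      by move: xC1; rewrite -ez zC.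
    by move: yC1; rewrite -ez zC.
  by rewrite cards0; move: f1; clear; lia.
have [z zX zB] : exists2 z, z \in C1 :|: [set x; y] & z \notin Bad a b.
  by apply: find_good ab abF _; rewrite cX; clear; lia.
have [za zb zbl] := notBad zB.
have zC1 : z \in C1.
  move: zX; rewrite in_setU in_set2 => /orP [] // /orP [] /eqP ez.
    by move: zbl; rewrite ez bx.
  by move: zbl; rewrite ez by_.
have yx : y != x by rewrite eq_sym.
have o1 := C_order x1 E1 yx y1 yC1 zC1.
have hw : d x (v 1) + d (v 1) y <= walk_len d x s.
  have h := vdist (i:=1) (j:=k) (lo:=1) (hi:=k).
  rewrite HL (@big_cat_nat _ _ _ 1 0 k) ?(ltnW k2') // big_nat1 /=.
  rewrite lerD2l -vk; apply: h; rewrite ?leqnn ?(ltnW k2') //.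
have dxy : d x y <= walk_len d x s by rewrite -vk; exact: (vL (leq0n _) (leqnn _)).
exists z; split => //; first by rewrite zbl.
have t1 := d_tri a x z.
have t2 := d_tri z x b.
have t3 := d_tri x (v 1) z.
have s1 := d_sym z x.
have s2 := d_sym (v 1) z.
have s3 := d_sym y (v 1).
lra.
Qed.

Lemma core_walk : exists q, [/\ is_walk (EE :\: F) x q, last x q = y &
  walk_len d x q <= (8 * f + 2)%:R * walk_len d x s].
Proof.
set L := walk_len d x s.
have L0 : 0 <= L := walk_len_ge0 x s.
set W := fun m => \sum_(m.+1 - 2 * f <= l < minn k (m + 2 * f)) d (v l) (v l.+1).
have W0 : forall m, 0 <= W m by move=> m; apply: sumr_ge0 => l _; apply: d_ge0.
set B := fun m => if (2 * f <= k)%N then 2 * W m else 4 * L.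
have B0 : forall m, 0 <= B m.
  move=> m; rewrite /B; case: ifP => _; [have := W0 m | idtac]; lra.
have key : forall m, (m < k)%N -> exists q, [/\ is_walk (EE :\: F) (v m) q,
    last (v m) q = v m.+1 & walk_len d (v m) q <= d (v m) (v m.+1) + B m].
  move=> m mk; have := B0 m; have := d_ge0 (v m) (v m.+1).
  case: (boolP ([set v m; v m.+1] \in F)) => abF hd hB.
    have [z [za zb zc zD]] : exists z, [/\ z != v m, z != v m.+1,
       ~~ blocked (v m) (v m.+1) z || (z \notin C_set ord f [set v m; v m.+1]) &
       d (v m) z + d z (v m.+1) <= B m].
      rewrite /B; case: ifP => fk.
        have [z [za zb zc zD]] := good_long fk mk abF.
        by exists z; rewrite zc.
      have fk' : (k < 2 * f)%N by rewrite ltnNge fk.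
      have [z [za zb zc zD]] := good_short fk' mk abF.
      by exists z.
    have [c [e1 e2 cD]] := detour (v_neq mk) (vE mk) abF za zb zc.
    exists [:: c; v m.+1]; split => //=.
      by rewrite /is_walk /= e1 e2.
    lra.
  exists [:: v m.+1]; split => //=.
    rewrite /is_walk /= andbT in_setD abF /=.
    exact: (fintype.subsetP E'_sub _ (vE mk)).
  lra.
have [q [wq lq cq]] := concat_walks key.
exists q; split => //; first by rewrite lq.
apply: le_trans cq _.
rewrite big_split /= -HL.
have fr : (1 <= f%:R :> R) by rewrite ler1n.
case: (leqP (2 * f) k) => fk.
  have e : \sum_(0 <= m < k) B m = 2 * \sum_(0 <= m < k) W m.
    by rewrite mulr_sumr; apply: eq_bigr => m _; rewrite /B fk.
  rewrite e.
  have dc := double_count k (fun l => d_ge0 (v l) (v l.+1)).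
  rewrite -HL -/W in dc.
  have e4 : (4 * f - 1)%:R = 4 * f%:R - 1 :> R.
    by rewrite natrB ?natrM //; move: f1; clear; lia.
  have e8 : (8 * f + 2)%:R = 8 * f%:R + 2 :> R by rewrite natrD natrM.
  rewrite e4 in dc; rewrite e8.
  have dc' : \sum_(0 <= m < k) W m <= (4 * f%:R - 1) * L by exact: dc.
  rewrite -/L; nra.
have e : \sum_(0 <= m < k) B m = k%:R * (4 * L).
  have hf : (2 * f <= k)%N = false by rewrite leqNgt fk.
  under eq_bigr => m _ do rewrite /B hf.
  rewrite sumr_const_nat subn0; exact: (esym (mulr_natl _ _)).
rewrite e.
have kr : (k%:R <= 2 * f%:R - 1 :> R).
  have : (k + 1 <= 2 * f)%N by move: fk; clear; lia.
  rewrite -(ler_nat R) natrD natrM => h; lra.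
have e8 : (8 * f + 2)%:R = 8 * f%:R + 2 :> R by rewrite natrD natrM.
rewrite e8 -/L; nra.
Qed.

End Core.
Lemma pair_bound (t : R) x y : 1 <= t -> is_t_spanner d t E' -> x != y ->
  [set x; y] \notin F ->
  (sp_dist d (EE :\: F) x y <= ((8 * f + 2)%:R * t * d x y)%:E)%E.
Proof.
move=> t1 sp xy xyF.
have T1 : (1 <= (8 * f + 2)%:R :> R) by rewrite ler1n addn2.
have dxy0 := d_ge0 x y.
case: (boolP ([set x; y] \in EE)) => xyE.
  apply: le_trans (sp_le_walk (s := [:: y]) _ _) _ => //.
    by rewrite /is_walk /= andbT in_setD xyF xyE.
  rewrite lee_fin /= addr0.
  have h : 1 <= (8 * f + 2)%:R * t by nra.
  nra.
apply/lee_addgt0Pr => e e0.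
set c := (8 * f + 2)%:R : R.
have c0 : 0 < c by apply: lt_le_trans T1; rewrite ltr01.
have e'0 : 0 < e / c by apply: divr_gt0.
have : (sp_dist d E' x y < (t * d x y + e / c)%:E)%E.
  apply: le_lt_trans (sp x y) _; rewrite lte_fin; lra.
move/sp_walk_lt => [s [ws ls lt]].
have [s' [ws' ls' us' le']] := shorten_walk ws.
have ls2 : last x s' = y by rewrite ls' ls.
have [q [wq lq cq]] := core_walk xy xyF xyE ws' us' ls2.
apply: le_trans (sp_le_walk wq lq) _.
rewrite -EFinD lee_fin.
have ec : c * (e / c) = e by rewrite mulrCA divff ?mulr1 // gt_eqF.
have l0 := walk_len_ge0 x s'.
apply: le_trans cq _.
have : c * walk_len d x s' <= c * (t * d x y + e / c).
  by rewrite ler_pM2l //; apply: le_trans le' (ltW lt).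
rewrite mulrDr ec mulrA; lra.
Qed.
Lemma K_edge u u' : [set u; u'] \in (@complete_edges T) :\: F ->
  u != u' /\ [set u; u'] \notin F.
Proof.
rewrite in_setD inE => /andP [nF c2]; split => //.
by move: c2; rewrite cards2; case: (u != u').
Qed.

Lemma global_bound t : 1 <= t -> is_t_spanner d t E' -> forall p q,
  (sp_dist d (EE :\: F) p q <=
   ((8 * f + 2)%:R * t)%:E * sp_dist d ((@complete_edges T) :\: F) p q)%E.
Proof.
move=> t1 sp p q.
set c := (8 * f + 2)%:R * t.
have T1 : (1 <= (8 * f + 2)%:R :> R) by rewrite ler1n addn2.
have c1 : 1 <= c by rewrite /c; nra.
have c0 : 0 < c by apply: lt_le_trans c1; rewrite ltr01.
have K0 : (0 <= sp_dist d ((@complete_edges T) :\: F) p q)%E.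
  apply: le_ereal_inf_tmp => z [s _ <-]; rewrite lee_fin; apply: walk_len_ge0.
move: K0; case Em: (sp_dist d ((@complete_edges T) :\: F) p q) => [r| |] //= K0.
  apply/lee_addgt0Pr => e e0.
  rewrite -EFinM -EFinD.
  set eps := e / (c + 1).
  have eps0 : 0 < eps by apply: divr_gt0 => //; lra.
  have : (sp_dist d ((@complete_edges T) :\: F) p q < (r + eps)%:E)%E.
    by rewrite Em lte_fin; lra.
  move/sp_walk_lt => [s [ws ls lt]].
  set k := size s.
  set del := eps / (k%:R + 1).
  have k0 : 0 <= (k%:R : R) by apply: ler0n.
  have del0 : 0 < del by apply: divr_gt0 => //; lra.
  have key : forall m, (m < k)%N -> exists q0,
      [/\ is_walk (EE :\: F) (vtx p s m) q0, last (vtx p s m) q0 = vtx p s m.+1 &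
      walk_len d (vtx p s m) q0 <= c * d (vtx p s m) (vtx p s m.+1) + del].
    move=> m mk.
    have := (pathP p ws) m mk; rewrite -/(vtx p s m.+1) => /K_edge [uu nF].
    have pb := pair_bound t1 sp uu nF.
    have : (sp_dist d (EE :\: F) (vtx p s m) (vtx p s m.+1) <
           (c * d (vtx p s m) (vtx p s m.+1) + del)%:E)%E.
      by apply: le_lt_trans pb _; rewrite lte_fin -/c; lra.
    move/sp_walk_lt => [q0 [w0 l0 lt0]]; exists q0; split => //; exact: ltW.
  have [q1 [w1 l1 c1']] := concat_walks key.
  have lq : last p q1 = q by rewrite l1.
  apply: le_trans (sp_le_walk w1 lq) _.
  rewrite lee_fin; apply: le_trans c1' _.
  rewrite big_split /= -mulr_sumr -walk_len_sum sumr_const_nat subn0 -/k.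
  have kd : del *+ k <= eps.
    rewrite -mulr_natl /del mulrCA ger_pMr //.
    by rewrite ler_pdivrMr ?mul1r; lra.
  have ce : (c + 1) * eps = e by rewrite /eps mulrCA divff ?mulr1 // gt_eqF //; lra.
  have : c * walk_len d p s <= c * (r + eps).
    by rewrite ler_pM2l // ltW.
  nra.
by rewrite gt0_muley // leey.
Qed.

End Faults.
Lemma card_bigcup_le (I U : finType) (A : {set I}) (S : I -> {set U}) :
  (#|\bigcup_(i in A) S i| <= \sum_(i in A) #|S i|)%N.
Proof.
have K0 : (#|(set0 : {set U})| <= 0)%N by rewrite cards0.
apply: (big_rec2 (fun (X : {set U}) (n : nat) => is_true (#|X| <= n)%N) K0).
move=> i X n _ h; apply: leq_trans (leq_card_setU _ _) _; by rewrite leq_add2l.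
Qed.

Lemma edge_count : simple_edges E' ->
  (#|fd_construction E' ord f| <= (4 * f - 1) * #|E'|)%N.
Proof.
move=> se.
set S := fun e : {set T} => [set [set a0; c] | a0 in e, c in C_set ord f e].
have sub : fd_construction E' ord f \subset E' :|: \bigcup_(e in E') S e.
  apply/fintype.subsetP => g; rewrite inE => /orP [gE | ]; first by rewrite inE gE.
  rewrite inE => /existsP [a /existsP [b /existsP [c /and4P [ab abE cC]]]].
  rewrite in_setU; case/orP => /eqP ->; apply/orP; right; apply/bigcupP;
    exists [set a; b] => //; apply/imset2P.
    by exists a c => //; rewrite !inE eqxx.
  by exists b c => //; [rewrite !inE eqxx orbT | rewrite finset.setUC].
have cS : forall e, e \in E' -> (#|S e| <= 2 * (2 * f - 1))%N.
  move=> e eE; rewrite /S curry_imset2X; apply: leq_trans (leq_imset_card _ _) _.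
  rewrite cardsX (se e eE) leq_mul2l /=.
  rewrite /C_set cardsE; apply: leq_trans (card_size _) _.
  by rewrite size_take; case: ifP => // /negbT; rewrite -leqNgt.
apply: leq_trans (subset_leq_card sub) _.
apply: leq_trans (leq_card_setU _ _) _.
apply: leq_trans (leq_add (leqnn _) (card_bigcup_le _ _)) _.
have h : (\sum_(e in E') #|S e| <= \sum_(e in E') (2 * (2 * f - 1)))%N.
  by apply: leq_sum => e eE; apply: cS.
apply: leq_trans (leq_add (leqnn _) h) _.
rewrite sum_nat_const; move: f1; clear; nia.
Qed.

End Walks.
Theorem theorem2 (R : realType) (T : finType) (d : T -> T -> R) (t : R)
    (E' : {set {set T}}) (f : nat) (ord : {set T} -> seq T) :
  is_metric d -> 1 <= t -> simple_edges E' -> is_t_spanner d t E' ->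
  (1 <= f)%N -> (2 * f + 1 <= #|T|)%N ->
  valid_orders d E' ord ->
  is_fault_degree_spanner d f ((8 * f + 2)%:R * t) (fd_construction E' ord f) /\
  (#|fd_construction E' ord f| <= (4 * f - 1) * #|E'|)%N.
Proof.
move=> dm t1 se sp f1 nT vo; split.
  move=> F FE Fdeg p q.
  exact: (global_bound dm f1 nT vo Fdeg t1 sp p q).
exact: (edge_count ord f1 se).
Qed.
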